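(* Let $X$ be a connected graph (a finite 1-dimensional CW complex). Then there is a canonical isomorphism $$\det(\mathbb R V(X))\otimes \bigotimes_{e\in E(X)} \det(\mathbb R H(e)) \cong\det(H_1(X;\mathbb R))\otimes \det(\mathbb R E(X)).$$
   Context: For a finite-dimensional real vector space $W$ of dimension $n$, $\det(W)=\wedge^n W$. For a finite set $Z$, $\mathbb R Z$ is the real vector space with basis $Z$. For a graph $X$, $V(X)$ is its set of vertices, $E(X)$ its set of edges, and for an edge $e$, $H(e)$ is the set of the two half-edges of $e$. *)

(* Defs.v *)
(* Real vector spaces are modelled as subspaces of the
   coordinate spaces  R^T = {ffun T -> R^o}  (T a finite type), over an
   arbitrary real field R (the reals being a particular instance). *)
From HB Require Import structures.
From mathcomp Require Import all_boot all_order all_algebra.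
From mathcomp Require Import fingroup perm.
Set Implicit Arguments. Unset Strict Implicit. Unset Printing Implicit Defensive.
Import Order.TTheory GRing.Theory Num.Theory.
Local Open Scope ring_scope.

(* vertices, edges, half-edges; every half-edge has an end vertex and
   belongs to an edge; each edge e has exactly two half-edges H(e).
   Loops and multiple edges are allowed. *)
Record graph := Graph {
  gV : finType; gE : finType; gH : finType;
  gend : gH -> gV;
  gedge : gH -> gE;
  gedgeP : forall e, #|[set h | gedge h == e]| = 2 }.

Definition adj (G : graph) : rel (gV G) := fun u w =>
  [exists h, exists h', [&& gedge h == gedge h', gend h == u & gend h' == w]].

Definition connected (G : graph) : Prop :=
  (0 < #|gV G|)%N /\ forall u w, connect (@adj G) u w.

Definition is_aut (G : graph) (sV : {perm gV G}) (sE : {perm gE G})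
  (sH : {perm gH G}) : Prop :=
  (forall h, gend (sH h) = sV (gend h)) /\ (forall h, gedge (sH h) = sE (gedge h)).

Definition fsp (R : fieldType) (T : finType) := {ffun T -> R^o}.

(* u_1 /\ ... /\ u_k  in  /\^k R^Z, viewed (canonically, via the basis Z)
   as the alternating function  (a_1..a_k) |-> det [u_i(a_j)]  on Z^k. *)
Definition wedge (R : fieldType) (Z : finType) (k : nat)
  (u : k.-tuple (fsp R Z)) : fsp R (k.-tuple Z) :=
  [ffun a : k.-tuple Z => \det (\matrix_(i < k, j < k) (tnth u i) (tnth a j))].

(* det(U) = /\^k U for k = dim U, the line in /\^k R^Z spanned by the
   wedge of a basis of U. *)
Definition detl (R : fieldType) (Z : finType) (k : nat)
  (U : {vspace fsp R Z}) : {vspace fsp R (k.-tuple Z)} :=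
  <[wedge [tuple (vbasis U)`_i | i < k]]>%VS.

Definition tens (R : fieldType) (A B : finType) (L1 : {vspace fsp R A})
  (L2 : {vspace fsp R B}) : {vspace fsp R (A * B)%type} :=
  <<[seq [ffun p : (A * B)%type => f p.1 * g p.2] | f : fsp R A <- vbasis L1, g : fsp R B <- vbasis L2]>>%VS.

(* tensor product over i in I of subspaces L i <= R^Y, inside R^(Y^I) *)
Definition bigtens (R : fieldType) (I Y : finType) (L : I -> {vspace fsp R Y})
  : {vspace fsp R {ffun I -> Y}} :=
  <<[seq [ffun t : {ffun I -> Y} => \prod_i ((vbasis (L i))`_(c i) : fsp R Y) (t i)]
     | c : {ffun I -> 'I_#|Y| } ]>>%VS.

Definition RHe (R : fieldType) (G : graph) (e : gE G) : {vspace fsp R (gH G)} :=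
  <<[seq [ffun x : gH G => ((x == h)%:R : R^o)] | h <- enum [pred h | gedge h == e]]>>%VS.

(* cellular 1-chains: c : H -> R with c(h) + c(h') = 0 for the two
   half-edges of each edge; boundary  v |-> sum of c over half-edges at v
   (this is minus the usual boundary; the kernel is the same). *)
Definition antisym (R : fieldType) (G : graph) (c : fsp R (gH G)) : fsp R (gH G) :=
  [ffun h => \sum_(h' | gedge h' == gedge h) c h'].
Definition bd (R : fieldType) (G : graph) (c : fsp R (gH G)) : fsp R (gV G) :=
  [ffun v => \sum_(h | gend h == v) c h].

(* H_1(X;R) = cycles (no 2-cells) *)
Definition H1 (R : fieldType) (G : graph) : {vspace fsp R (gH G)} :=
  (lker (linfun (@antisym R G)) :&: lker (linfun (@bd R G)))%VS.

Definition LT (G : graph) : finType :=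
  (#|gV G|.-tuple (gV G) * {ffun gE G -> 2.-tuple (gH G)})%type.
Definition RT (R : fieldType) (G : graph) : finType :=
  ((\dim (H1 R G)).-tuple (gH G) * #|gE G|.-tuple (gE G))%type.

Definition lhsL (R : fieldType) (G : graph) : {vspace fsp R (LT G)} :=
  tens (detl #|gV G| (fullv : {vspace fsp R (gV G)}))
       (bigtens (fun e => detl 2 (RHe R e))).

Definition rhsL (R : fieldType) (G : graph) : {vspace fsp R (RT R G)} :=
  tens (detl (\dim (H1 R G)) (H1 R G)) (detl #|gE G| (fullv : {vspace fsp R (gE G)})).

Definition pullL (R : fieldType) (G : graph) (sV : {perm gV G}) (sE : {perm gE G})
  (sH : {perm gH G}) (f : fsp R (LT G)) : fsp R (LT G) :=
  [ffun x : LT G => f (map_tuple sV x.1, [ffun e => map_tuple sH (x.2 ((sE^-1)%g e))])].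

Definition pullR (R : fieldType) (G : graph) (sE : {perm gE G})
  (sH : {perm gH G}) (f : fsp R (RT R G)) : fsp R (RT R G) :=
  [ffun x : RT R G => f (map_tuple sH x.1, map_tuple sE x.2)].

(* Main.v *)
Require Import Defs.
From HB Require Import structures.
From mathcomp Require Import all_boot all_order all_algebra.
From mathcomp Require Import fingroup perm.
Set Implicit Arguments. Unset Strict Implicit. Unset Printing Implicit Defensive.
Import Order.TTheory GRing.Theory Num.Theory.
Local Open Scope ring_scope.
Section LinAlg.
Variables (K : fieldType) (vT : vectType K).

Definition ismx d (b : d.-tuple vT) (f : vT -> vT) (M : 'M[K]_d) :=
  forall i : 'I_d, f b`_i = \sum_j M i j *: b`_j.

Definition chi (f : 'End(vT)) (U : {vspace vT}) : K :=
  \det (\matrix_(i < \dim U, j < \dim U) coord (vbasis U) j (f (vbasis U)`_i)).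

Lemma comb_mul d (A B : 'M[K]_d) (b : d.-tuple vT) i :
  \sum_j A i j *: (\sum_k B j k *: b`_k) = \sum_k (A *m B) i k *: b`_k.
Proof.
under eq_bigr do rewrite scaler_sumr.
rewrite exchange_big /=; apply: eq_bigr => k _.
by rewrite mxE scaler_suml; apply: eq_bigr => j _; rewrite scalerA.
Qed.

Lemma basis_change d (b b' : d.-tuple vT) U :
  basis_of U b -> basis_of U b' ->
  exists C : 'M[K]_d, [/\ \det C != 0 & forall i : 'I_d, b'`_i = \sum_j C i j *: b`_j].
Proof.
move=> hb hb'.
pose C := \matrix_(i < d, j < d) coord b j b'`_i.
pose D := \matrix_(i < d, j < d) coord b' j b`_i.
have memb' (i : 'I_d) : (b'`_i \in U) by apply: (basis_mem hb'); apply: mem_nth; rewrite size_tuple.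
have memb (i : 'I_d) : (b`_i \in U) by apply: (basis_mem hb); apply: mem_nth; rewrite size_tuple.
have eC (i : 'I_d) : b'`_i = \sum_j C i j *: b`_j.
  by rewrite (coord_basis hb (memb' i)); apply: eq_bigr => j _; rewrite mxE.
have eD (i : 'I_d) : b`_i = \sum_j D i j *: b'`_j.
  by rewrite (coord_basis hb' (memb i)); apply: eq_bigr => j _; rewrite mxE.
have CD : C *m D = 1%:M.
  apply/matrixP => i k.
  have : b'`_i = \sum_j (C *m D) i j *: b'`_j.
    by rewrite -comb_mul {1}eC; apply: eq_bigr => j _; rewrite -eD.
  move/(congr1 (coord b' k)); rewrite coord_sum_free ?(basis_free hb') //.
  rewrite coord_free ?(basis_free hb') // => <-; by rewrite mxE.
exists C; split => //.
apply/negP => /eqP h.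
have := congr1 determinant CD; rewrite det_mulmx h mul0r det1 => /eqP.
by rewrite eq_sym oner_eq0.
Qed.

Lemma ismx_det_eq d (b b' : d.-tuple vT) U (f : 'End(vT)) (M M' : 'M[K]_d) :
  basis_of U b -> basis_of U b' -> ismx b f M -> ismx b' f M' ->
  \det M = \det M'.
Proof.
move=> hb hb' hM hM'.
have [C [C0 eC]] := basis_change hb hb'.
have fb' (i : 'I_d) : f b'`_i = \sum_j C i j *: f b`_j.
  by rewrite eC linear_sum; apply: eq_bigr => j _; rewrite linearZ.
have E : C *m M = M' *m C.
  apply/matrixP => i k.
  have e1 : f b'`_i = \sum_k (C *m M) i k *: b`_k.
    by rewrite fb' -comb_mul; apply: eq_bigr => j _; rewrite (hM j).
  have e2 : f b'`_i = \sum_k (M' *m C) i k *: b`_k.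
    by rewrite (hM' i) -comb_mul; apply: eq_bigr => j _; rewrite eC.
  have := congr1 (coord b k) (etrans (esym e1) e2).
  by rewrite !coord_sum_free ?(basis_free hb).
have := congr1 determinant E; rewrite !det_mulmx mulrC => /mulIf; apply.
exact: C0.
Qed.

Lemma chi_ismx d (b : d.-tuple vT) U (f : 'End(vT)) M :
  basis_of U b -> ismx b f M -> \det M = chi f U.
Proof.
move=> hb hM.
have memb (i : 'I_d) : (b`_i \in U) by apply: (basis_mem hb); apply: mem_nth; rewrite size_tuple.
have dU := size_basis hb; subst d.
have fU : forall x, x \in U -> f x \in U.
  move=> x; rewrite -(span_basis hb) => /coord_span ->.
  rewrite linear_sum; apply: memv_suml => i _; rewrite linearZ; apply: memvZ.
  change (f b`_i \in <<b>>%VS); rewrite (hM i); apply: memv_suml => j _; apply/memvZ; rewrite (span_basis hb); exact: memb.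
apply: (ismx_det_eq hb (vbasisP U) hM) => i.
have mi : (vbasis U)`_i \in U.
  by apply: vbasis_mem; apply: mem_nth; rewrite size_tuple.
by rewrite (coord_vbasis (fU _ mi)); apply: eq_bigr => j _; rewrite mxE.
Qed.

Lemma chi_id U : chi \1%VF U = 1.
Proof.
rewrite /chi -(@det1 K (\dim U)); congr determinant; apply/matrixP => i j.
rewrite !mxE lfunE /= coord_free //; exact: basis_free (vbasisP U).
Qed.

End LinAlg.
Section LemK.
Variables (K : fieldType) (vT wT : vectType K).

Lemma nth_lsh k l (w : k.-tuple vT) (u : l.-tuple vT) (i : 'I_k) :
  (cat_tuple w u)`_(lshift l i) = w`_i.
Proof. by rewrite /= nth_cat size_tuple ltn_ord. Qed.

Lemma nth_rsh k l (w : k.-tuple vT) (u : l.-tuple vT) (i : 'I_l) :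
  (cat_tuple w u)`_(rshift k i) = u`_i.
Proof. by rewrite /= nth_cat size_tuple ltnNge leq_addr /= addKn. Qed.

Lemma chiK (f : 'End(vT)) (g : 'End(wT)) (P : 'Hom(vT, wT)) (U : {vspace vT}) :
  (forall x, x \in U -> f x \in U) -> (forall x, x \in U -> P (f x) = g (P x)) ->
  chi f U = chi f (U :&: lker P) * chi g (P @: U).
Proof.
move=> fU fP.
set W := (U :&: lker P)%VS; set Uc := (U :\: lker P)%VS.
have fW x : x \in W -> f x \in W.
  rewrite !memv_cap !memv_ker => /andP[xU /eqP Px0].
  by rewrite fU //= fP // Px0 linear0.
pose w := vbasis W; pose u := vbasis Uc.
pose b := cat_tuple w u.
have dir : directv (W + Uc).
  apply/directv_addP; apply/eqP; rewrite -subv0 -(capv_diff U (lker P)) capvC.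
  by apply: capvS => //; apply: capvSr.
have hb : basis_of U b.
  have -> : U = (W + Uc)%VS by rewrite addvC addv_diff_cap.
  exact: cat_basis dir (vbasisP W) (vbasisP Uc).
have memb (i : 'I_(\dim W + \dim Uc)) : b`_i \in U.
  by apply: (basis_mem hb); apply: mem_nth; rewrite size_tuple.
pose M := \matrix_(i < \dim W + \dim Uc, j < \dim W + \dim Uc) coord b j (f b`_i).
have hM : ismx b f M.
  by move=> i; rewrite (coord_basis hb (fU _ (memb i))); apply: eq_bigr => j _; rewrite mxE.
have wW (i : 'I_(\dim W)) : w`_i \in W.
  by apply: vbasis_mem; apply: mem_nth; rewrite size_tuple.
have coordW x : x \in W -> forall j, coord b (rshift (\dim W) j) x = 0.
  move=> xW j.
  pose c := row_mx (\row_j coord w j x) (0 : 'rV[K]_(\dim Uc)).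
  have -> : x = \sum_J c 0 J *: b`_J.
    rewrite big_split_ord /=.
    rewrite [X in _ = _ + X]big1 => [|i _]; last by rewrite row_mxEr mxE scale0r.
    rewrite addr0 (coord_vbasis xW); apply: eq_bigr => i _.
    by rewrite row_mxEl mxE nth_lsh.
  by rewrite coord_sum_free ?(basis_free hb) // row_mxEr mxE.
have ur0 : ursubmx M = 0.
  by apply/matrixP => i j; rewrite !mxE nth_lsh coordW // fW.
have hA : ismx w f (ulsubmx M).
  move=> i; have := hM (lshift (\dim Uc) i). rewrite nth_lsh big_split_ord /=. move=> ->.
  rewrite [X in _ + X]big1 ?addr0 => [|j _].
    by apply: eq_bigr => j _; congr (_ *: _); [rewrite !mxE | rewrite nth_cat size_tuple ltn_ord].
  by move/matrixP: ur0 => /(_ i j); rewrite !mxE => ->; rewrite scale0r.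
have hbu : basis_of (P @: U) (map_tuple P u).
  rewrite -limg_ker_compl; apply: limg_basis_of; first exact: capv_diff.
  exact: vbasisP.
have hD : ismx (map_tuple P u) g (drsubmx M).
  move=> i; rewrite /= (nth_map 0) ?size_tuple // -fP; last by rewrite -(nth_rsh w); exact: memb.
  rewrite -(nth_rsh w) (hM (rshift _ i)) linear_sum big_split_ord /=.
  rewrite [X in X + _]big1 ?add0r => [|j _]; last first.
    rewrite nth_lsh; apply/eqP; rewrite -memv_ker; apply: memvZ.
    by move: (wW j); rewrite memv_cap => /andP[].
  apply: eq_bigr => j _; rewrite linearZ (nth_map 0) ?size_tuple //; congr (_ *: P _).
    by rewrite !mxE nth_rsh.
  by rewrite nth_cat size_tuple ltnNge leq_addr /= addKn.
rewrite -(chi_ismx (f:=f) hb hM) -(chi_ismx (f:=f) (vbasisP W) hA) -(chi_ismx (f:=g) hbu hD).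
by rewrite -{1}(submxK M) ur0 det_lblock.
Qed.

End LemK.
Section Wedge.
Variables (K : fieldType) (Z : finType).

Definition pullf (s : Z -> Z) (x : fsp K Z) : fsp K Z := [ffun z => x (s z)].

Lemma pullf_lin s : linear (pullf s).
Proof. by move=> a x y; apply/ffunP => z; rewrite !ffunE. Qed.

HB.instance Definition _ s := GRing.isLinear.Build K (fsp K Z) (fsp K Z) _ (pullf s) (pullf_lin s).

Lemma wedge_comb k (u u' : k.-tuple (fsp K Z)) (C : 'M[K]_k) :
  (forall i : 'I_k, u'`_i = \sum_j C i j *: u`_j) -> wedge u' = \det C *: wedge u.
Proof.
move=> hC; apply/ffunP => a; rewrite !ffunE; rewrite -[RHS]/(\det C * \det (\matrix_(i, j) tnth u i (tnth a j))); rewrite -det_mulmx; congr determinant.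
apply/matrixP => i j; rewrite !mxE (tnth_nth 0) hC sum_ffunE.
by apply: eq_bigr => l _; rewrite !mxE ffunE (tnth_nth 0).
Qed.

Lemma wedge_pull k (u : k.-tuple (fsp K Z)) s a :
  wedge u (map_tuple s a) = wedge (map_tuple (pullf s) u) a.
Proof.
rewrite !ffunE; congr determinant; apply/matrixP => i j.
by rewrite !mxE !tnth_map ffunE.
Qed.

Lemma chi_pull s (U : {vspace fsp K Z}) k (b : k.-tuple (fsp K Z)) :
  basis_of U b -> (forall x, x \in U -> pullf s x \in U) ->
  [ffun a => wedge b (map_tuple s a)] = chi (linfun (pullf s)) U *: wedge b.
Proof.
move=> hb sU.
have memb (i : 'I_k) : b`_i \in U.
  by apply: (basis_mem hb); apply: mem_nth; rewrite size_tuple.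
pose M := \matrix_(i < k, j < k) coord b j (pullf s b`_i).
have hM : ismx b (linfun (pullf s)) M.
  move=> i; rewrite lfunE /= (coord_basis hb (sU _ (memb i))).
  by apply: eq_bigr => j _; rewrite mxE.
rewrite -(chi_ismx hb hM); apply/ffunP => a; rewrite ffunE wedge_pull.
rewrite (@wedge_comb k b _ M) ?ffunE // => i.
rewrite (nth_map 0) ?size_tuple //; move: (hM i); rewrite lfunE /= => ->.
by [].
Qed.

End Wedge.
Lemma det2 (K : comNzRingType) (A : 'M[K]_2) : \det A = A 0 0 * A 1 1 - A 0 1 * A 1 0.
Proof.
rewrite (expand_det_row _ 0) !big_ord_recl big_ord0 addr0 /cofactor !det_mx11 !mxE /=.
rewrite expr0 mul1r expr1 mulN1r mulrN.
by congr (_ * _ - _ * _); congr (A _ _); apply/val_inj.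
Qed.
Section Graph1.
Variables (R : realFieldType) (G : graph).
Local Notation V := (gV G).
Local Notation E := (gE G).
Local Notation H := (gH G).

Definition delta (A : finType) (a : A) : fsp R A := [ffun z => ((z == a)%:R : R^o)].

Lemma sum_delta (A : finType) (P : pred A) (a : A) :
  \sum_(z | P z) ((z == a)%:R : R) = (P a)%:R.
Proof.
rewrite (big_mkcond P) (bigD1 a) //= big1 ?addr0 => [|z /negPf za]; last first.
  by rewrite za mulr0n; case: (P z).
by rewrite eqxx; case: (P a).
Qed.

Lemma ex1 (e : E) : exists h : H, gedge h == e.
Proof.
have /card_gt0P [h] : (0 < #|[set h | gedge h == e]|)%N by rewrite gedgeP.
by rewrite inE => he; exists h.
Qed.

Definition h1 e := xchoose (ex1 e).
Lemma h1E e : gedge (h1 e) = e.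
Proof. exact/eqP/(xchooseP (ex1 e)). Qed.

Lemma two_set (e : E) : exists x y : H, [/\ x != y & forall h, (gedge h == e) = (h == x) || (h == y)].
Proof.
have /cards2P [x [y [xy hA]]] : #|[set h | gedge h == e]| == 2 by rewrite gedgeP.
exists x, y; split => // h.
by have := in_set2 h x y; rewrite -hA inE.
Qed.

Lemma ex2 (e : E) : exists h : H, (gedge h == e) && (h != h1 e).
Proof.
have [x [y [xy hA]]] := two_set e.
have := h1E e; move/eqP; rewrite hA => /orP[]/eqP hx.
  by exists y; rewrite hA eqxx orbT hx eq_sym.
by exists x; rewrite hA eqxx hx.
Qed.

Definition h2 e := xchoose (ex2 e).
Lemma h2E e : gedge (h2 e) = e.
Proof. by have /andP[/eqP] := xchooseP (ex2 e). Qed.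
Lemma h12 e : h1 e != h2 e.
Proof. by have /andP[_] := xchooseP (ex2 e); rewrite eq_sym. Qed.

Lemma hE e h : (gedge h == e) = (h == h1 e) || (h == h2 e).
Proof.
apply/idP/idP => [he|]; last by case/orP => /eqP ->; rewrite ?h1E ?h2E.
have [x [y [xy hA]]] := two_set e.
have := h12 e; have := hA (h1 e); have := hA (h2 e); have := hA h.
rewrite he h1E h2E eqxx.
move=> /esym/orP[]/eqP -> /esym/orP[]/eqP -> /esym/orP[]/eqP ->;
  rewrite ?eqxx ?orbT //= ?(negPf xy) ?(eq_sym y x) ?(negPf xy) //.
Qed.

Lemma sum_edge (F : H -> R) e : \sum_(h | gedge h == e) F h = F (h1 e) + F (h2 e).
Proof.
rewrite (bigD1 (h1 e)) ?h1E //= (bigD1 (h2 e)) /=; last by rewrite h2E eqxx eq_sym h12.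
rewrite big1 ?addr0 // => h /andP[/andP[he hn1] hn2].
by move: he; rewrite hE (negPf hn1) (negPf hn2).
Qed.

Lemma antisym_lin : linear (@antisym R G).
Proof.
move=> a x y; apply/ffunP => h; rewrite !ffunE scaler_sumr -big_split.
by apply: eq_bigr => h' _; rewrite !ffunE.
Qed.
HB.instance Definition _ := GRing.isLinear.Build R (fsp R H) (fsp R H) _ (@antisym R G) antisym_lin.

Lemma bd_lin : linear (@bd R G).
Proof.
move=> a x y; apply/ffunP => h; rewrite !ffunE scaler_sumr -big_split.
by apply: eq_bigr => h' _; rewrite !ffunE.
Qed.
HB.instance Definition _ := GRing.isLinear.Build R (fsp R H) (fsp R V) _ (@bd R G) bd_lin.

Definition C1 : {vspace fsp R H} := lker (linfun (@antisym R G)).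

Lemma H1E : H1 R G = (C1 :&: lker (linfun (@bd R G)))%VS.
Proof. by []. Qed.

Lemma memC1 x : (x \in C1) = (antisym x == 0).
Proof. by rewrite memv_ker lfunE. Qed.

End Graph1.
Section Graph2.
Variables (R : realFieldType) (G : graph).
Local Notation V := (gV G).
Local Notation E := (gE G).
Local Notation H := (gH G).
Variables (sV : {perm V}) (sE : {perm E}) (sH : {perm H}).
Hypothesis hA : is_aut sV sE sH.

Lemma endH h : gend (sH h) = sV (gend h). Proof. exact: hA.1. Qed.
Lemma edgeH h : gedge (sH h) = sE (gedge h). Proof. exact: hA.2. Qed.

Lemma antisym_pull (x : fsp R H) : antisym (pullf sH x) = pullf sH (antisym x).
Proof.
apply/ffunP => h; rewrite !ffunE [RHS](reindex_inj (@perm_inj _ sH)) /=.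
apply: eq_big => [h'|h' _]; last by rewrite ffunE.
by rewrite !edgeH (inj_eq perm_inj).
Qed.

Lemma bd_pull (x : fsp R H) : bd (pullf sH x) = pullf sV (bd x).
Proof.
apply/ffunP => v; rewrite !ffunE [RHS](reindex_inj (@perm_inj _ sH)) /=.
apply: eq_big => [h'|h' _]; last by rewrite ffunE.
by rewrite !endH (inj_eq perm_inj).
Qed.

Lemma C1_stable x : x \in C1 R G -> pullf sH x \in C1 R G.
Proof. by rewrite !memC1 antisym_pull => /eqP ->; rewrite linear0. Qed.

Lemma H1_stable x : x \in H1 R G -> pullf sH x \in H1 R G.
Proof.
rewrite H1E !memv_cap => /andP[/C1_stable -> ]; rewrite !memv_ker !lfunE /= bd_pull.
by move/eqP ->; rewrite linear0.
Qed.

Lemma flip e : (sH (h1 e) = h1 (sE e) /\ sH (h2 e) = h2 (sE e)) \/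
               (sH (h1 e) = h2 (sE e) /\ sH (h2 e) = h1 (sE e)).
Proof.
have e1 : gedge (sH (h1 e)) == sE e by rewrite edgeH h1E.
have e2 : gedge (sH (h2 e)) == sE e by rewrite edgeH h2E.
have n12 : sH (h1 e) != sH (h2 e) by rewrite (inj_eq perm_inj) h12.
move: e1 e2 n12; rewrite !hE => /orP[]/eqP -> /orP[]/eqP ->; rewrite ?eqxx //;
  move=> _; (by left) || (by right).
Qed.

Definition eps e : R := if sH (h1 e) == h1 (sE e) then 1 else -1.

Definition cvec e : fsp R H := delta R (h1 e) - delta R (h2 e).

Lemma cvec_pull e : pullf sH (cvec (sE e)) = eps e *: cvec e.
Proof.
rewrite /eps; case: (flip e) => [[f1 f2]|[f1 f2]].
  rewrite f1 eqxx scale1r; apply/ffunP => h; rewrite !ffunE.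
  by rewrite -f1 -f2 !(inj_eq perm_inj).
rewrite f1 (eq_sym (h2 _)) (negPf (h12 _)); apply/ffunP => h; rewrite !ffunE.
rewrite -f1 -f2 !(inj_eq perm_inj).

by rewrite scaleN1r opprB.
Qed.

Definition omega e : fsp R (2.-tuple H) := wedge [tuple delta R (h1 e); delta R (h2 e)].

Lemma omegaE e (a : 2.-tuple H) : omega e a =
  ((tnth a 0 == h1 e)%:R * (tnth a 1 == h2 e)%:R - (tnth a 1 == h1 e)%:R * (tnth a 0 == h2 e)%:R : R).
Proof. by rewrite ffunE det2 !mxE !ffunE. Qed.

Lemma omega_pull e (a : 2.-tuple H) :
  omega (sE e) (map_tuple sH a) = eps e * omega e a.
Proof.
rewrite !omegaE !tnth_map /eps; case: (flip e) => [[f1 f2]|[f1 f2]].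
  by rewrite f1 eqxx mul1r -f1 -f2 !(inj_eq perm_inj).
rewrite f1 (eq_sym (h2 _)) (negPf (h12 _)) -f1 -f2 !(inj_eq perm_inj) mulN1r.
by rewrite opprB [X in _ - X]mulrC [X in X - _]mulrC.
Qed.

End Graph2.
Section Std.
Variables (R : realFieldType) (A : finType).

Lemma scaleRE (a b : R) : (a *: (b : R^o)) = a * b.
Proof. by []. Qed.

Lemma sum_ev (W : nmodType) (F : A -> W) :
  \sum_(j < #|A|) F (enum_val j) = \sum_a F a.
Proof. by rewrite [RHS](reindex _ (onW_bij _ (@enum_val_bij A))). Qed.

Lemma prod_ev (F : A -> R) :
  \prod_(j < #|A|) F (enum_val j) = \prod_a F a.
Proof. by rewrite [RHS](reindex _ (onW_bij _ (@enum_val_bij A))). Qed.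

Lemma sum_ev_delta (W : lmodType R) (F : A -> W) (b : A) :
  \sum_(j < #|A|) ((enum_val j == b)%:R : R) *: F (enum_val j) = F b.
Proof.
rewrite (sum_ev (fun a => ((a == b)%:R : R) *: F a)).
by rewrite (bigD1 b) //= eqxx scale1r big1 ?addr0 // => a /negPf ->; rewrite scale0r.
Qed.

Definition std : #|A|.-tuple (fsp R A) := [tuple delta R (enum_val i) | i < #|A|].

Lemma std_nth (i : 'I_#|A|) : std`_i = delta R (enum_val i).
Proof. by rewrite nth_mktuple. Qed.

Lemma fsp_expand (x : fsp R A) : x = \sum_(i < #|A|) x (enum_val i) *: delta R (enum_val i).
Proof.
apply/ffunP => z; rewrite sum_ffunE (sum_ev (fun a => (x a *: delta R a) z)).
rewrite (bigD1 z) //= !ffunE eqxx scaleRE mulr1 big1 ?addr0 // => a az.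
by rewrite !ffunE eq_sym (negPf az) scaleRE mulr0.
Qed.

Lemma std_basis : basis_of fullv std.
Proof.
apply/andP; split.
  rewrite eqEsubv subvf /=; apply/subvP => x _; rewrite (fsp_expand x).
  apply: memv_suml => i _; apply: memvZ; rewrite -std_nth; apply: memv_span.
  by apply: mem_nth; rewrite size_tuple.
apply/freeP => k hk i; move/ffunP/(_ (enum_val i)): hk; rewrite sum_ffunE ffunE.
rewrite (bigD1 i) //= big1 ?addr0 => [|j ji]; last first.
  by rewrite std_nth !ffunE (inj_eq enum_val_inj) eq_sym (negPf ji) scaleRE mulr0.
by rewrite std_nth !ffunE eqxx scaleRE mulr1.
Qed.

Definition Nmx (s : {perm A}) : 'M[R]_#|A| :=
  \matrix_(i < #|A|, j < #|A|) ((enum_val j == (s^-1)%g (enum_val i))%:R).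

Lemma pull_delta (s : {perm A}) a : pullf s (delta R a) = delta R ((s^-1)%g a).
Proof.
apply/ffunP => z; rewrite !ffunE.
by rewrite -[in RHS](inj_eq (@perm_inj _ s)) permKV.
Qed.

Lemma std_ismx (s : {perm A}) : ismx std (linfun (pullf s)) (Nmx s).
Proof.
move=> i; rewrite lfunE /= std_nth pull_delta.
under eq_bigr do rewrite mxE std_nth.
by rewrite sum_ev_delta.
Qed.

Lemma chi_std (s : {perm A}) : chi (linfun (pullf s)) fullv = \det (Nmx s).
Proof. exact: esym (chi_ismx std_basis (std_ismx s)). Qed.

Lemma Nmx_sq (s : {perm A}) : \det (Nmx s) * \det (Nmx s) = 1.
Proof.
rewrite -{2}det_tr -det_mulmx -(@det1 R #|A|); congr determinant.
apply/matrixP => i k; rewrite !mxE.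
under eq_bigr do rewrite !mxE.
rewrite (sum_ev (fun a => ((a == (s^-1)%g (enum_val i))%:R : R) * (a == (s^-1)%g (enum_val k))%:R)).
rewrite (bigD1 ((s^-1)%g (enum_val i))) //= eqxx mul1r big1 ?addr0 => [|a /negPf ->]; last by rewrite mul0r.
by rewrite (inj_eq perm_inj) (inj_eq enum_val_inj).
Qed.

Lemma sq_ne0 (x : R) : x * x = 1 -> x != 0.
Proof. by move=> h; apply/eqP => x0; move: h; rewrite x0 mul0r => /eqP; rewrite eq_sym oner_eq0. Qed.

End Std.
Section Graph4.
Variables (R : realFieldType) (G : graph).
Local Notation V := (gV G).
Local Notation E := (gE G).
Local Notation H := (gH G).

Lemma h1_inj (a b : E) : (h1 a == h1 b) = (a == b).
Proof.
apply/eqP/eqP => [e|->] //; have := congr1 (@gedge G) e; by rewrite !h1E.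
Qed.

Lemma h1h2 (a b : E) : (h1 a == h2 b) = false.
Proof.
apply/negP => /eqP e; have := congr1 (@gedge G) e; rewrite h1E h2E => ab; subst.
by move: (h12 b); rewrite e eqxx.
Qed.

Definition cb : #|E|.-tuple (fsp R H) := [tuple cvec R (enum_val i) | i < #|E|].

Lemma cvec_C1 e : cvec R e \in C1 R G.
Proof.
rewrite memC1; apply/eqP/ffunP => h; rewrite !ffunE.
under eq_bigr do rewrite !ffunE.
by rewrite sumrB !sum_delta h1E h2E subrr.
Qed.

Lemma cb_basis : basis_of (C1 R G) cb.
Proof.
apply/andP; split.
  rewrite eqEsubv; apply/andP; split.
    apply/span_subvP => y /(nthP 0) [i ilt <-].
    rewrite size_tuple in ilt; rewrite /cb -[i]/(nat_of_ord (Ordinal ilt)) nth_mktuple; exact: cvec_C1.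
  apply/subvP => x; rewrite memC1 => /eqP ax.
  have ex : x = \sum_(i < #|E|) x (h1 (enum_val i)) *: cb`_i.
    apply/ffunP => h; rewrite sum_ffunE /cb.
    under eq_bigr do rewrite nth_mktuple !ffunE.
    rewrite (sum_ev (fun e => x (h1 e) *: (((h == h1 e)%:R - (h == h2 e)%:R) : R^o))).
    rewrite (bigD1 (gedge h)) //= big1 ?addr0 => [|e ne]; last first.
      have n1 : (h == h1 e) = false.
        by apply/negP => /eqP hh; move: ne; rewrite hh h1E eqxx.
      have n2 : (h == h2 e) = false.
        by apply/negP => /eqP hh; move: ne; rewrite hh h2E eqxx.
      by rewrite n1 n2 subrr scaleRE mulr0.
    set e0 := gedge h; have he0 : gedge h == e0 by [].
    clearbody e0.
    have s0 : x (h1 e0) + x (h2 e0) = 0.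
      by move/ffunP: ax => /(_ (h1 e0)); rewrite !ffunE h1E sum_edge.
    move: he0; rewrite hE => /orP[]/eqP hh; rewrite hh eqxx.
      by rewrite h1h2 subr0 scaleRE mulr1.
    rewrite eq_sym h1h2 sub0r scaleRE mulrN1; apply/eqP; rewrite -addr_eq0.
    by rewrite addrC s0.
  rewrite ex; apply: memv_suml => i _; apply: memvZ; apply: memv_span.
  by apply: mem_nth; rewrite size_tuple.
apply/freeP => k hk i; move/ffunP/(_ (h1 (enum_val i))): hk; rewrite sum_ffunE ffunE /cb.
under eq_bigr do rewrite nth_mktuple !ffunE.
rewrite (bigD1 i) //= big1 ?addr0 => [|j ji]; last first.
  by rewrite h1_inj h1h2 (inj_eq enum_val_inj) eq_sym (negPf ji) subr0 scaleRE mulr0.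
by rewrite eqxx h1h2 subr0 scaleRE mulr1.
Qed.

Variables (sV : {perm V}) (sE : {perm E}) (sH : {perm H}).
Hypothesis hA : is_aut sV sE sH.

Lemma cb_ismx : ismx cb (linfun (pullf sH))
   (diag_mx (\row_i eps R sE sH ((sE^-1)%g (enum_val i))) *m Nmx R sE).
Proof.
move=> i; rewrite lfunE /= /cb nth_mktuple.
rewrite -{1}[enum_val i](permKV sE) (cvec_pull R hA) mul_diag_mx.
under eq_bigr do rewrite !mxE nth_mktuple -scalerA.
by rewrite -scaler_sumr sum_ev_delta.
Qed.

Lemma chi_C1 : chi (linfun (pullf sH)) (C1 R G) = (\prod_e eps R sE sH e) * \det (Nmx R sE).
Proof.
rewrite -(chi_ismx cb_basis cb_ismx) det_mulmx det_diag; congr (_ * _).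
under eq_bigr do rewrite mxE.
rewrite (prod_ev (fun e => eps R sE sH ((sE^-1)%g e))).
rewrite [LHS](reindex_inj (@perm_inj _ sE)); apply: eq_bigr => e _.
by rewrite permK.
Qed.

End Graph4.
Section Graph5.
Variables (R : realFieldType) (G : graph).
Local Notation V := (gV G).
Local Notation E := (gE G).
Local Notation H := (gH G).
Variable v0 : V.

Definition Sf (x : fsp R V) : fsp R V := (\sum_v x v) *: delta R v0.

Lemma Sf_lin : linear Sf.
Proof.
move=> a x y; rewrite /Sf scalerA -scalerDl; congr (_ *: _).
rewrite mulr_sumr -big_split; apply: eq_bigr => v _; by rewrite !ffunE.
Qed.
HB.instance Definition _ := GRing.isLinear.Build R (fsp R V) (fsp R V) _ Sf Sf_lin.

Lemma memSf x : (x \in lker (linfun Sf)) = (\sum_v x v == 0).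
Proof.
rewrite memv_ker lfunE /= /Sf scaler_eq0; case: (_ == 0) => //=.
by apply/negP => /eqP/ffunP/(_ v0); rewrite !ffunE eqxx => /eqP; rewrite oner_eq0.
Qed.

Lemma chi_V_split (sV : {perm V}) :
  chi (linfun (pullf sV)) fullv = chi (linfun (pullf sV)) (lker (linfun Sf)).
Proof.
have := @chiK R _ _ (linfun (pullf sV)) \1%VF (linfun Sf) fullv.
rewrite capfv chi_id mulr1; apply => [x _|x _]; first exact: memvf.
rewrite !lfunE /= /Sf; congr (_ *: _).
by rewrite [RHS](reindex_inj (@perm_inj _ sV)); apply: eq_bigr => v _; rewrite ffunE.
Qed.

Lemma dv_adj u w : adj u w -> delta R u - delta R w \in (linfun (@bd R G) @: C1 R G)%VS.
Proof.
case/existsP => h /existsP [h' /and3P [/eqP eh /eqP hu /eqP hw]].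
pose c := delta R h - delta R h'.
have cC1 : c \in C1 R G.
  rewrite memC1; apply/eqP/ffunP => k; rewrite !ffunE.
  under eq_bigr do rewrite !ffunE.
  by rewrite sumrB !sum_delta eh subrr.
have -> : delta R u - delta R w = linfun (@bd R G) c.
  rewrite lfunE /=; apply/ffunP => v; rewrite !ffunE.
  under [RHS]eq_bigr do rewrite !ffunE.
  by rewrite sumrB !sum_delta hu hw !(eq_sym v).
exact: memv_img.
Qed.

Lemma dv_conn u w : connect (@adj G) u w -> delta R u - delta R w \in (linfun (@bd R G) @: C1 R G)%VS.
Proof.
case/connectP => p; elim: p u => [|a p IH] u /=.
  by move=> _ ->; rewrite subrr mem0v.
case/andP => ua pa wl.
have -> : delta R u - delta R w = (delta R u - delta R a) + (delta R a - delta R w).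
  by rewrite addrA subrK.
by apply: memvD; [exact: dv_adj | exact: IH].
Qed.

Hypothesis hc : connected G.

Lemma img_bd : (linfun (@bd R G) @: C1 R G)%VS = lker (linfun Sf).
Proof.
apply: subv_anti; apply/andP; split.
  apply/subvP => y /memv_imgP [x xC1 ->]; rewrite memSf lfunE /=.
  move: xC1; rewrite memC1 => /eqP ax.
  under eq_bigr do rewrite ffunE.
  have -> : \sum_v \sum_(h | gend h == v) x h = \sum_h x h.
    by rewrite [RHS](partition_big (@gend G) predT).
  rewrite (partition_big (@gedge G) predT) //=; apply/eqP/big1 => e _.
  by move/ffunP: ax => /(_ (h1 e)); rewrite !ffunE h1E.
apply/subvP => y; rewrite memSf => /eqP sy.
have -> : y = \sum_v y v *: (delta R v - delta R v0).
  under eq_bigr do rewrite scalerBr.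
  rewrite sumrB -scaler_suml sy scale0r subr0.
  rewrite [LHS](fsp_expand y) (sum_ev (fun v => y v *: delta R v)) //.
apply: memv_suml => v _; apply: memvZ; apply: dv_conn; exact: hc.2.
Qed.

Variables (sV : {perm V}) (sE : {perm E}) (sH : {perm H}).
Hypothesis hA : is_aut sV sE sH.

Lemma chi_identity :
  chi (linfun (pullf sH)) (H1 R G) * chi (linfun (pullf sE)) fullv =
  chi (linfun (pullf sV)) fullv * \prod_e eps R sE sH e.
Proof.
have hK := @chiK R _ _ (linfun (pullf sH)) (linfun (pullf sV)) (linfun (@bd R G)) (C1 R G).
rewrite -H1E img_bd -chi_V_split in hK.
have e1 : chi (linfun (pullf sH)) (H1 R G) * \det (Nmx R sV) = (\prod_e eps R sE sH e) * \det (Nmx R sE).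
  rewrite -(chi_C1 R hA) -chi_std hK // => x xC1; rewrite !lfunE /=.
    exact: (@C1_stable R G sV sE sH hA x xC1).
  exact: (@bd_pull R G sV sE sH hA x).
rewrite !chi_std.
apply: (mulIf (sq_ne0 (Nmx_sq R sV))).
rewrite mulrAC e1 -mulrA Nmx_sq mulr1.
by rewrite [RHS]mulrC mulrA Nmx_sq mul1r.
Qed.

End Graph5.
Section Lines.
Variables (K : fieldType) (vT : vectType K).

Lemma vbasis_line (x : vT) : exists c : K,
  c != 0 /\ (vbasis <[x]>%VS : seq vT) = if x == 0 then [::] else [:: c *: x].
Proof.
have hb : basis_of <[x]>%VS (vbasis <[x]>%VS : seq vT) := vbasisP _.
have sz : size (vbasis <[x]>%VS : seq vT) = (x != 0) by rewrite size_tuple dim_vline.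
move: hb sz; set s := (vbasis <[x]>%VS : seq vT); clearbody s.
case: s => [|y [|z s]] hb //= sz; last by case: (x != 0) sz.
  by exists 1; split; [exact: oner_neq0 | case: eqP sz].
have /vlineP [c yc] := basis_mem hb (mem_head _ _).
exists c; split; last by move: sz; case: eqP => //; rewrite yc.
apply: contraNneq (basis_not0 hb (mem_head _ _)) => c0.
by rewrite yc c0 scale0r.
Qed.

Lemma line_scale (c : K) (x : vT) : c != 0 -> <[c *: x]>%VS = <[x]>%VS.
Proof.
move=> cn; apply: subv_anti; rewrite -!memvE; apply/andP; split.
  exact: memvZ (memv_line x).
rewrite -[x in x \in _](scalerK cn); exact: memvZ (memv_line _).
Qed.

Lemma line0 : <[0 : vT]>%VS = 0%VS.
Proof. by apply/eqP; rewrite -dimv_eq0 dim_vline eqxx. Qed.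

Lemma tuple_vbasis (U : {vspace vT}) k : \dim U = k -> basis_of U [tuple (vbasis U)`_i | i < k].
Proof.
move=> dk; subst k.
have -> : [tuple (vbasis U)`_i | i < \dim U] = vbasis U.
  by apply: eq_from_tnth => i; rewrite tnth_mktuple (tnth_nth 0).
exact: vbasisP.
Qed.

End Lines.

Section Tens.
Variables (R : realFieldType).

Definition tensor (A B : finType) (f : fsp R A) (g : fsp R B) : fsp R (A * B)%type :=
  [ffun p => f p.1 * g p.2].

Lemma tens_line (A B : finType) (x1 : fsp R A) (x2 : fsp R B) :
  tens <[x1]>%VS <[x2]>%VS = <[tensor x1 x2]>%VS.
Proof.
rewrite /tens; have [c1 [c1n ->]] := vbasis_line x1; have [c2 [c2n ->]] := vbasis_line x2.
have [->|n1] := eqVneq x1 0.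
  rewrite /= span_nil.
  have -> : tensor (0 : fsp R A) x2 = (0 : fsp R (A * B)%type) by apply/ffunP => p; rewrite !ffunE mul0r.
  by rewrite line0.
have [->|n2] := eqVneq x2 0.
  rewrite ?eqxx ?(negPf n1) /= span_nil.
  have -> : tensor x1 (0 : fsp R B) = (0 : fsp R (A * B)%type) by apply/ffunP => p; rewrite !ffunE mulr0.
  by rewrite line0.
rewrite ?(negPf n1) ?(negPf n2) /= span_seq1 -[RHS](line_scale _ (mulf_neq0 c1n c2n)); congr (<[_]>%VS).
by apply/ffunP => p; rewrite !ffunE !scaleRE mulrACA.
Qed.

Definition evsc (A B : finType) (t0 : A) (s : R) (b : fsp R B) (x : fsp R A) : fsp R B :=
  (x t0 * s) *: b.

Lemma evsc_lin A B t0 s b : linear (@evsc A B t0 s b).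
Proof.
move=> a x y; rewrite /evsc !ffunE scalerA -scalerDl; congr (_ *: _).
by rewrite mulrDl mulrA.
Qed.
HB.instance Definition _ A B t0 s b :=
  GRing.isLinear.Build R (fsp R A) (fsp R B) _ (@evsc A B t0 s b) (evsc_lin t0 s b).

Lemma wedge_std_at (A : finType) : wedge (std R A) [tuple enum_val j | j < #|A|] = 1.
Proof.
rewrite ffunE -(@det1 R #|A|); congr determinant; apply/matrixP => i j.
by rewrite !mxE !tnth_mktuple !ffunE (inj_eq enum_val_inj) eq_sym.
Qed.

Lemma dim_fsp (A : finType) : \dim (fullv : {vspace fsp R A}) = #|A|.
Proof. exact: size_basis (std_basis R A). Qed.

Lemma yV_at (A : finType) :
  wedge [tuple (vbasis (fullv : {vspace fsp R A}))`_i | i < #|A|] [tuple enum_val j | j < #|A|] != 0.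
Proof.
have hb := tuple_vbasis (dim_fsp A).
have [C [C0 eC]] := basis_change (std_basis R A) hb.
by rewrite (wedge_comb eC) ffunE wedge_std_at scaleRE mulr1.
Qed.

End Tens.
Section Graph7.
Variables (R : realFieldType) (G : graph).
Local Notation V := (gV G).
Local Notation E := (gE G).
Local Notation H := (gH G).

Definition two (e : E) : 2.-tuple (fsp R H) := [tuple delta R (h1 e); delta R (h2 e)].

Lemma two_basis (e : E) : basis_of (RHe R e) (two e).
Proof.
apply/andP; split.
  apply/eqP; apply: eq_span => y; apply/idP/idP.
    rewrite !inE => /orP[]/eqP ->; apply/mapP.
      by exists (h1 e); rewrite ?mem_enum ?inE ?h1E.
    by exists (h2 e); rewrite ?mem_enum ?inE ?h2E.
  case/mapP => h; rewrite mem_enum inE hE => /orP[]/eqP -> ->; by rewrite !inE eqxx ?orbT.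
rewrite /= free_cons seq1_free andbC; apply/andP; split.
  by apply/eqP => /ffunP/(_ (h2 e)); rewrite !ffunE eqxx => /eqP; rewrite oner_eq0.
apply/negP; rewrite span_seq1 => /vlineP [c] /ffunP/(_ (h1 e)); rewrite !ffunE eqxx.
by rewrite h1h2 scaleRE mulr0 => /eqP; rewrite oner_eq0.
Qed.

Lemma omega_at (e : E) : omega R e [tuple h1 e; h2 e] = 1.
Proof. by rewrite omegaE !(tnth_nth (h1 e)) /= !eqxx h1h2 eq_sym h1h2 mulr0 subr0 mulr1. Qed.

Lemma ye_eq (e : E) : exists d : R, d != 0 /\
  wedge [tuple (vbasis (RHe R e))`_i | i < 2] = d *: omega R e.
Proof.
have hb := two_basis e; have d2 := size_basis hb.
have [C [C0 eC]] := basis_change hb (tuple_vbasis d2).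
by exists (\det C); split => //; rewrite (wedge_comb eC).
Qed.

Definition dd (e : E) : R := ((vbasis (detl 2 (RHe R e)))`_0 : fsp R _) [tuple h1 e; h2 e].

Lemma vb_Le (e : E) : (vbasis (detl 2 (RHe R e)) : seq _) = [:: dd e *: omega R e] /\ dd e != 0.
Proof.
have [d [dn ye]] := ye_eq e.
have nz : d *: omega R e != 0.
  by apply/eqP => /ffunP/(_ [tuple h1 e; h2 e]); rewrite [LHS]ffunE omega_at [RHS]ffunE scaleRE mulr1; apply/eqP.
have [c [cn vb]] := vbasis_line (d *: omega R e).
rewrite (negPf nz) scalerA in vb.
have E1 : (vbasis (detl 2 (RHe R e)) : seq _) = [:: (c * d) *: omega R e] by rewrite /detl ye.
have -> : dd e = c * d by rewrite /dd E1 /= ffunE omega_at scaleRE mulr1.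
by split => //; apply: mulf_neq0.
Qed.

Lemma vb_Le_nth (e : E) n : ((vbasis (detl 2 (RHe R e)))`_n : fsp R _) = if n == 0%N then dd e *: omega R e else 0.
Proof. by rewrite (vb_Le e).1; case: n => [|[|n]]. Qed.

Definition F0 : fsp R {ffun E -> 2.-tuple H} := [ffun t : {ffun E -> 2.-tuple H} => \prod_e omega R e (t e)].

Lemma bigtens_eq : bigtens (fun e => detl 2 (RHe R e)) = <[F0]>%VS.
Proof.
have Ypos : forall e : E, (0 < #|{: 2.-tuple H}|)%N.
  by move=> e; apply/card_gt0P; exists [tuple h1 e; h1 e].
have Gc (c : {ffun E -> 'I_#|{: 2.-tuple H}| }) :
  [ffun t : {ffun E -> 2.-tuple H} =>
     \prod_i (((vbasis (detl 2 (RHe R i)))`_(c i) : fsp R _) (t i))] =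
  if [forall e, (c e == 0 :> nat)] then (\prod_e dd e) *: F0 else 0.
  apply/ffunP => t; rewrite ffunE.
  case: (boolP [forall e, (c e == 0 :> nat)]) => [/forallP all0 | /forallPn [e ne]].
    rewrite ffunE ffunE scaleRE -big_split; apply: eq_bigr => i _.
    by rewrite vb_Le_nth (all0 i) ffunE scaleRE.
  by rewrite (bigD1 e) //= vb_Le_nth (negPf ne) ffunE mul0r ffunE.
have pn : \prod_e dd e != 0 by apply/prodf_neq0 => e _; exact: (vb_Le e).2.
apply: subv_anti; apply/andP; split.
  apply/span_subvP => y /imageP [c _ ->]; rewrite Gc; case: ifP => _.
    exact: memvZ (memv_line _).
  exact: mem0v.
rewrite -memvE.
pose c0 : {ffun E -> 'I_#|{: 2.-tuple H}| } := [ffun e => Ordinal (Ypos e)].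
have -> : F0 = (\prod_e dd e)^-1 *: [ffun t : {ffun E -> 2.-tuple H} =>
     \prod_i (((vbasis (detl 2 (RHe R i)))`_(c0 i) : fsp R _) (t i))].
  rewrite Gc; have -> : [forall e, (c0 e == 0 :> nat)] by apply/forallP => e; rewrite ffunE.
  by rewrite scalerA mulVf // scale1r.
apply: memvZ; apply: memv_span; apply/imageP; by exists c0.
Qed.

End Graph7.
Section Final.
Variables (R : realFieldType) (G : graph).
Local Notation V := (gV G).
Local Notation E := (gE G).
Local Notation H := (gH G).

Definition yV := wedge [tuple (vbasis (fullv : {vspace fsp R V}))`_i | i < #|V|].
Definition yH := wedge [tuple (vbasis (H1 R G))`_i | i < \dim (H1 R G)].
Definition yE := wedge [tuple (vbasis (fullv : {vspace fsp R E}))`_i | i < #|E|].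

Lemma eL : lhsL R G = <[tensor yV (F0 R G)]>%VS.
Proof. by rewrite /lhsL bigtens_eq /detl tens_line. Qed.

Lemma eR : rhsL R G = <[tensor yH yE]>%VS.
Proof. by rewrite /rhsL /detl tens_line. Qed.

Variables (sV : {perm V}) (sE : {perm E}) (sH : {perm H}).
Hypothesis hA : is_aut sV sE sH.

Lemma yV_pull a : yV (map_tuple sV a) = chi (linfun (pullf sV)) fullv * yV a.
Proof.
have := chi_pull (s:=sV) (tuple_vbasis (dim_fsp R V)) (fun x _ => memvf _).
by move/ffunP/(_ a); rewrite !ffunE.
Qed.

Lemma yE_pull a : yE (map_tuple sE a) = chi (linfun (pullf sE)) fullv * yE a.
Proof.
have := chi_pull (s:=sE) (tuple_vbasis (dim_fsp R E)) (fun x _ => memvf _).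
by move/ffunP/(_ a); rewrite !ffunE.
Qed.

Lemma yH_pull a : yH (map_tuple sH a) = chi (linfun (pullf sH)) (H1 R G) * yH a.
Proof.
have := chi_pull (s:=sH) (tuple_vbasis (erefl (\dim (H1 R G)))) (@H1_stable R G sV sE sH hA).
by move/ffunP/(_ a); rewrite !ffunE.
Qed.

Lemma F0_pull (t : {ffun E -> 2.-tuple H}) :
  F0 R G [ffun e => map_tuple sH (t ((sE^-1)%g e))] = (\prod_e eps R sE sH e) * F0 R G t.
Proof.
rewrite !ffunE (reindex_inj (@perm_inj _ sE)) /= -big_split; apply: eq_bigr => e _.
by rewrite ffunE permK (omega_pull R hA).
Qed.

Lemma tensorE (A B : finType) (f : fsp R A) (g : fsp R B) p : tensor f g p = f p.1 * g p.2.
Proof. by rewrite ffunE. Qed.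

Lemma scaleffE (A : finType) (c : R) (f : fsp R A) p : (c *: f) p = c * f p.
Proof. by rewrite ffunE. Qed.

Lemma pL : pullL sV sE sH (tensor yV (F0 R G)) =
  (chi (linfun (pullf sV)) fullv * \prod_e eps R sE sH e) *: tensor yV (F0 R G).
Proof.
apply/ffunP => y; rewrite scaleffE ffunE !tensorE /= yV_pull F0_pull.
by rewrite mulrACA.
Qed.

Lemma pR : pullR sE sH (tensor yH yE) =
  (chi (linfun (pullf sH)) (H1 R G) * chi (linfun (pullf sE)) fullv) *: tensor yH yE.
Proof.
apply/ffunP => y; rewrite scaleffE ffunE !tensorE /= yH_pull yE_pull.
by rewrite mulrACA.
Qed.

End Final.
Theorem proposition2p4 (R : realFieldType) (G : graph) :
  connected G ->
  exists Phi : 'Hom(fsp R (LT G), fsp R (RT R G)),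
    (Phi @: lhsL R G)%VS = rhsL R G /\
    (forall sV sE sH, is_aut sV sE sH ->
       forall x, x \in lhsL R G -> Phi (pullL sV sE sH x) = pullR sE sH (Phi x)).
Proof.
move=> hc.
have [v0 _] : exists v0 : gV G, true by case/card_gt0P: hc.1 => v _; exists v.
pose aL := tensor (yV R G) (F0 R G).
pose bR := tensor (yH R G) (yE R G).
pose t0 : LT G := ([tuple enum_val j | j < #|gV G|], [ffun e => [tuple h1 e; h2 e]]).
have a0 : aL t0 != 0.
  rewrite /aL tensorE /= [F0 R G _]ffunE big1 ?mulr1 => [|e _]; first exact: yV_at.
  by rewrite ffunE omega_at.
pose Phi := linfun (evsc t0 (aL t0)^-1 bR).
have PhiE x : Phi x = (x t0 * (aL t0)^-1) *: bR by rewrite lfunE.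
have PaL : Phi aL = bR by rewrite PhiE mulfV // scale1r.
exists Phi; split.
  by rewrite eL eR limg_line PaL.
move=> sV sE sH hA x; rewrite eL => /vlineP [k ->].
have linL : pullL sV sE sH (k *: aL) = k *: pullL sV sE sH aL.
  by apply/ffunP => y; rewrite scaleffE [in LHS]ffunE scaleffE [in RHS]ffunE.
have linR : pullR sE sH (k *: bR) = k *: pullR sE sH bR.
  by apply/ffunP => y; rewrite scaleffE [in LHS]ffunE scaleffE [in RHS]ffunE.
change (Phi (pullL sV sE sH (k *: aL)) = pullR sE sH (Phi (k *: aL))).
rewrite linL (pL R hA) scalerA !PhiE !scaleffE -!mulrA mulfV // !mulr1.
rewrite linR (pR R hA) scalerA.
by rewrite (chi_identity R v0 hc hA).
Qed.
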